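(* Let $p\ge1$, $\mathbf m=(m_1,\ldots,m_p)\in\mathbb N^p$, $n\in\mathbb N$, $x\in\mathbb C$ with $0<|x|\le1$, and $\sigma_1,\ldots,\sigma_p\in\mathbb C$ with $0<|\sigma_j|<1$. Put $\sigma_{p+1}:=1/x$. Then \[ n\int_0^x t^{n-1}dt\,\frac{dt}{1-\sigma_1t}\Big(\frac{dt}{t}\Big)^{m_1-1}\cdots\frac{dt}{1-\sigma_pt}\Big(\frac{dt}{t}\Big)^{m_p-1} =\sum_{j=0}^{p}(-1)^j\,\frac{\zeta^\star_n\big(m_1,\ldots,m_j;\tfrac{\sigma_1}{\sigma_2},\ldots,\tfrac{\sigma_j}{\sigma_{j+1}}\big)\,\mathrm{Li}_{m_p,m_{p-1},\ldots,m_{j+1}}\big(\sigma_px,\tfrac{\sigma_{p-1}}{\sigma_p},\ldots,\tfrac{\sigma_{j+1}}{\sigma_{j+2}}\big)}{\sigma_1^{n+1}\sigma_2\cdots\sigma_p}, \] where for $j=0$ the $\zeta^\star_n$ factor is $1$ and for $j=p$ the $\mathrm{Li}$ factor is $1$.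
   Context: Iterated integrals: $\int_a^b f_q(t)dt\cdots f_1(t)dt:=\int_{a<t_q<\cdots<t_1<b}f_q(t_q)\cdots f_1(t_1)\,dt_1\cdots dt_q$, along the straight segment for complex endpoints. $\zeta^\star_n(\mathbf k;\mathbf x)=\sum_{n\ge n_1\ge\cdots\ge n_r\ge1}\prod_i x_i^{n_i}/n_i^{k_i}$, $\zeta^\star_n(\emptyset)=1$. Multiple polylogarithm: $\mathrm{Li}_{k_1,\ldots,k_r}(x_1,\ldots,x_r)=\sum_{n_1>\cdots>n_r>0}x_1^{n_1}\cdots x_r^{n_r}/(n_1^{k_1}\cdots n_r^{k_r})$, $\mathrm{Li}_\emptyset=1$. *)

(* Defs.v *)
From Stdlib Require Import Reals List.
From Coquelicot Require Import Coquelicot.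
Open Scope C_scope.

Definition line_int (g : C -> C) (a b : C) : C :=
  (b - a) * RInt (V := C_R_CompleteNormedModule)
                 (fun s : R => g (a + RtoC s * (b - a))) 0%R 1%R.

(* Iterated integral from 0, forms listed OUTERMOST first:
   itint_out [f_1; ...; f_q] u = int_{0 < t_q < ... < t_1 < u} f_q(t_q) ... f_1(t_1). *)
Fixpoint itint_out (fs : list (C -> C)) (u : C) : C :=
  match fs with
  | nil => 1
  | f :: fs' => line_int (fun t => f t * itint_out fs' t) 0 u
  end.

(* Paper's notation: int_0^u f_q(t)dt ... f_1(t)dt, forms listed left to right
   (innermost, i.e. smallest variable, first). *)
Definition itint (fs : list (C -> C)) (u : C) : C := itint_out (rev fs) u.

Definition lsum (f : nat -> C) (l : list nat) : C := fold_right Cplus 0 (map f l).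
Definition lprod (f : nat -> C) (l : list nat) : C := fold_right Cmult 1 (map f l).

(* zeta-star truncated: zstar n [(k1,x1);...;(kr,xr)]
   = sum_{n >= n1 >= ... >= nr >= 1} prod x_i^{n_i} / n_i^{k_i}; zstar n [] = 1. *)
Fixpoint zstar (n : nat) (kx : list (nat * C)) : C :=
  match kx with
  | nil => 1
  | (k, y) :: r =>
      lsum (fun n1 => Cpow y n1 / Cpow (RtoC (INR n1)) k * zstar n1 r) (seq 1 n)
  end.

(* Truncated multiple polylog: sum over N >= n1 > ... > nr > 0. *)
Fixpoint LiN (N : nat) (kx : list (nat * C)) : C :=
  match kx with
  | nil => 1
  | (k, y) :: r =>
      lsum (fun n1 => Cpow y n1 / Cpow (RtoC (INR n1)) k * LiN (n1 - 1) r) (seq 1 N)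
  end.

Definition Li (kx : list (nat * C)) : C :=
  (real (Lim_seq (fun N => fst (LiN N kx))), real (Lim_seq (fun N => snd (LiN N kx)))).

(* Main.v *)
Require Import Defs.
From Stdlib Require Import Reals List Arith Lia Lra ClassicalEpsilon FunctionalExtensionality.
From Coquelicot Require Import Coquelicot.
Open Scope C_scope.

Ltac cring := match goal with |- ?a = ?b => let E := fresh in assert (E : @eq C a b) by (simpl; ring); exact E end.

Lemma normC (z : C) : @norm C_AbsRing C_NormedModule z = Cmod z.
Proof. reflexivity. Qed.
Lemma normCR (z : C) : @norm R_AbsRing C_R_NormedModule z = Cmod z.
Proof.
destruct z. unfold norm; simpl. unfold prod_norm, Cmod; simpl. f_equal. unfold norm; simpl. unfold abs; simpl.
rewrite !Rmult_1_r, <- !Rabs_mult, !Rabs_pos_eq; try apply Rle_0_sqr; ring.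
Qed.
Lemma scalCR (r : R) (z : C) : @scal R_Ring C_R_ModuleSpace r z = RtoC r * z.
Proof.
destruct z; unfold scal; simpl. unfold prod_scal. simpl. unfold Cmult, RtoC; simpl.
f_equal; unfold scal; simpl; unfold mult; simpl; ring.
Qed.

Lemma Cmod_sum_n (a : nat -> C) K :
  Cmod (@sum_n C_AbelianMonoid a K) <= sum_n (fun n => Cmod (a n)) K.
Proof.
induction K.
- rewrite !sum_O. lra.
- rewrite !sum_Sn. eapply Rle_trans. apply Cmod_triangle.
  change (plus (sum_n (fun n : nat => Cmod (a n)) K) (Cmod (a (S K)))) with
   (sum_n (fun n : nat => Cmod (a n)) K + Cmod (a (S K)))%R. lra.
Qed.

Lemma lim_minus_const_C (u : nat -> C) (l c : C) :
  filterlim u eventually (locally l) ->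
  filterlim (fun M => Cmod (u M - c)) eventually (locally (Cmod (l - c))).
Proof.
intros H.
assert (H2 : filterlim (fun M => @plus C_AbelianMonoid (u M) (opp c)) eventually
   (locally (@plus C_AbelianMonoid l (opp c)))).
{ eapply filterlim_comp_2; [exact H | apply filterlim_const | apply (@filterlim_plus C_AbsRing C_NormedModule)]. }
eapply filterlim_comp. exact H2. apply (@filterlim_norm C_AbsRing C_NormedModule).
Qed.

Lemma series_tail_bound (a : nat -> C) (b : nat -> R) l L K :
  is_series a l -> is_series b L -> (forall N, Cmod (a N) <= b N) ->
  Cmod (l - sum_n a K) <= L - sum_n b K.
Proof.
intros Ha Hb Hab.
assert (H1 := lim_minus_const_C _ _ (sum_n a K) Ha).
assert (H2 : is_lim_seq (fun M => sum_n b M - sum_n b K)%R (L - sum_n b K)%R).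
{ apply is_lim_seq_minus'. exact Hb. apply is_lim_seq_const. }
assert (H3 := is_lim_seq_le_loc (fun M => Cmod (sum_n a M - sum_n a K)) (fun M => sum_n b M - sum_n b K)%R
  (Cmod (l - sum_n a K)) (L - sum_n b K)%R).
simpl in H3. apply H3; auto.
exists K. intros M HM.
assert (E := @sum_n_m_sum_n C_AbelianGroup a K M ltac:(lia)).
assert (E2 := @sum_n_m_sum_n R_AbelianGroup b K M ltac:(lia)).
change (minus (sum_n a M) (sum_n a K)) with (sum_n a M - sum_n a K) in E.
change (minus (sum_n b M) (sum_n b K)) with (sum_n b M - sum_n b K)%R in E2.
rewrite <- E, <- E2.
eapply Rle_trans. rewrite <- normC. exact (@norm_sum_n_m C_AbsRing C_NormedModule a (S K) M).
apply sum_n_m_le. intros; rewrite normC; auto.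
Qed.

Lemma ex_series_C_abs (a : nat -> C) :
  ex_series (fun n => Cmod (a n)) -> @ex_series C_AbsRing C_NormedModule a.
Proof.
intros H. apply (@ex_series_le C_AbsRing C_CompleteNormedModule a (fun n => Cmod (a n))); auto.
intros n. rewrite normC. lra.
Qed.

Lemma is_RInt_scal_vec (f : R -> R) a b (I : R) (w : C) :
  is_RInt f a b I -> is_RInt (V := C_R_NormedModule) (fun s => RtoC (f s) * w) a b (RtoC I * w).
Proof.
intros H. destruct w as [w1 w2].
assert (E : RtoC I * (w1, w2) = ((w1 * I)%R, (w2 * I)%R)).
{ unfold RtoC, Cmult; simpl. f_equal; ring. }
rewrite E.
apply (@is_RInt_fct_extend_pair R_NormedModule R_NormedModule).
- apply (is_RInt_ext (fun s => scal w1 (f s))).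
  + intros; unfold RtoC, Cmult; simpl. unfold scal; simpl; unfold mult; simpl; ring.
  + apply (is_RInt_scal f a b w1 I H).
- apply (is_RInt_ext (fun s => scal w2 (f s))).
  + intros; unfold RtoC, Cmult; simpl. unfold scal; simpl; unfold mult; simpl; ring.
  + apply (is_RInt_scal f a b w2 I H).
Qed.

Definition clamp (s : R) : R := Rmax 0 (Rmin s 1).
Lemma clamp_id s : (0 <= s <= 1)%R -> clamp s = s.
Proof. intros; unfold clamp. rewrite Rmin_left by lra. rewrite Rmax_right by lra. auto. Qed.
Lemma clamp_bnd s : (0 <= clamp s <= 1)%R.
Proof. unfold clamp. split. apply Rmax_l. apply Rmax_lub. lra. apply Rmin_r. Qed.

Definition intco (d : nat -> C) (N : nat) : C :=
  match N with O => 0 | S k => d k / RtoC (INR (S k)) end.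

Lemma Cpow_mul (a b : C) n : (a * b) ^ n = a ^ n * b ^ n.
Proof. induction n; simpl. ring. rewrite IHn. ring. Qed.

Lemma RtoC_pow (r : R) n : RtoC (r ^ n) = RtoC r ^ n.
Proof. induction n; simpl. reflexivity. rewrite RtoC_mult, IHn. reflexivity. Qed.

Lemma is_RInt_poly (d : nat -> C) (u : C) K :
  is_RInt (V := C_R_NormedModule) (fun s => sum_n (fun N => d N * (RtoC s * u) ^ N) K) 0 1
     (sum_n (fun N => d N * u ^ N / RtoC (INR (S N))) K).
Proof.
assert (Hm : forall N, is_RInt (V := C_R_NormedModule) (fun s => d N * (RtoC s * u) ^ N) 0 1
     (d N * u ^ N / RtoC (INR (S N)))).
{ intros N.
  apply (is_RInt_ext (fun s => RtoC (s ^ N) * (d N * u ^ N))).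
  - intros x _. assert (E: RtoC (x ^ N) * (d N * u ^ N) = d N * (RtoC x * u) ^ N) by (rewrite RtoC_pow, Cpow_mul; ring). exact E.
  - replace (d N * u ^ N / RtoC (INR (S N))) with (RtoC (1 ^ S N / INR (S N) - 0 ^ S N / INR (S N)) * (d N * u ^ N)).
    + apply is_RInt_scal_vec. apply is_RInt_pow.
    + rewrite pow1. simpl (0 ^ S N)%R. rewrite Rmult_0_l.
      unfold Rdiv. rewrite Rmult_0_l, Rminus_0_r, Rmult_1_l.
      rewrite RtoC_inv. unfold Cdiv. ring. apply not_0_INR. lia. }
induction K.
- rewrite sum_O. apply (is_RInt_ext (fun s => d 0%nat * (RtoC s * u) ^ 0)).
  intros; rewrite sum_O; auto. apply Hm.
- apply (is_RInt_ext (fun s => plus (sum_n (fun N => d N * (RtoC s * u) ^ N) K) (d (S K) * (RtoC s * u) ^ S K))).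
  intros; rewrite sum_Sn; auto.
  rewrite sum_Sn. apply (@is_RInt_plus C_R_NormedModule). apply IHK. apply Hm.
Qed.

Lemma is_series_C_unique (a : nat -> C) l1 l2 :
  is_series (K := C_AbsRing) (V := C_NormedModule) a l1 -> is_series (K := C_AbsRing) (V := C_NormedModule) a l2 -> l1 = l2.
Proof.
intros H1 H2. apply (@filterlim_locally_unique nat C_AbsRing C_NormedModule eventually _ (sum_n a)); auto.
Qed.

Lemma Cmod_clamp_le (s : R) (u : C) : (Cmod u <= 1)%R -> (Cmod (RtoC (clamp s) * u) <= 1)%R.
Proof.
intros Hu. rewrite Cmod_mult, Cmod_R. destruct (clamp_bnd s).
rewrite Rabs_pos_eq by lra. replace 1%R with (1 * 1)%R by ring.
apply Rmult_le_compat; auto. apply Cmod_ge_0.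
Qed.

Lemma Cmod_pow_le1 (z : C) n : (Cmod z <= 1)%R -> (Cmod (z ^ n) <= 1)%R.
Proof.
intros H. rewrite Cmod_pow. rewrite <- (pow1 n). apply pow_incr; split; auto. apply Cmod_ge_0.
Qed.

Lemma is_series_C_shift (a : nat -> C) l : a 0%nat = 0 ->
  is_series (K := C_AbsRing) (V := C_NormedModule) (fun k => a (S k)) l ->
  is_series (K := C_AbsRing) (V := C_NormedModule) a l.
Proof.
intros H0 H. apply is_series_decr_1.
match goal with |- is_series _ ?L => replace L with l end. exact H.
rewrite H0. assert (E : forall z : C, z = z + - RtoC 0) by (intros; ring). apply E.
Qed.

Lemma line_int_series (d : nat -> C) (g : C -> C) (u : C) :
  ex_series (fun N => Cmod (d N)) -> (Cmod u <= 1)%R ->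
  (forall r : R, (0 < r < 1)%R -> is_series (K := C_AbsRing) (V := C_NormedModule) (fun N => d N * (RtoC r * u) ^ N) (g (RtoC r * u))) ->
  is_series (K := C_AbsRing) (V := C_NormedModule) (fun N => intco d N * u ^ N) (line_int g 0 u).
Proof.
intros Hd Hu Hg.
set (term := fun (s : R) N => d N * (RtoC (clamp s) * u) ^ N).
assert (Hb : forall s N, (Cmod (term s N) <= Cmod (d N))%R).
{ intros s N. unfold term. rewrite Cmod_mult. rewrite <- (Rmult_1_r (Cmod (d N))) at 2.
  apply Rmult_le_compat_l. apply Cmod_ge_0. apply Cmod_pow_le1, Cmod_clamp_le; auto. }
assert (Hex : forall s, ex_series (K := C_AbsRing) (V := C_NormedModule) (term s)).
{ intros s. apply ex_series_C_abs. apply (@ex_series_le R_AbsRing R_CompleteNormedModule _ (fun N => Cmod (d N))); auto.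
  intros N. unfold norm; simpl; unfold abs; simpl. rewrite Rabs_pos_eq by apply Cmod_ge_0. auto. }
set (F := fun s => proj1_sig (constructive_indefinite_description _ (Hex s))).
assert (HF : forall s, is_series (K := C_AbsRing) (V := C_NormedModule) (term s) (F s)).
{ intros s. unfold F. apply proj2_sig. }
destruct Hd as [Sd HS].
set (P := fun K s => sum_n (term s) K).
assert (Hunif : filterlim P eventually (locally (F : fct_UniformSpace R C_R_CompleteNormedModule))).
{ apply (proj2 (filterlim_locally (U := fct_UniformSpace R C_R_CompleteNormedModule) P F)). intros eps.
  assert (HS' : filterlim (sum_n (fun N => Cmod (d N))) eventually (locally Sd)) by exact HS.
  pose proof (proj1 (@filterlim_locally_ball_norm R_AbsRing nat R_NormedModule eventually _ _ Sd) HS' eps) as HS2.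
  destruct HS2 as [K0 HK0].
  exists K0. intros K HK t.
  apply (@norm_compat1 R_AbsRing C_R_NormedModule). rewrite normCR.
  change (minus (P K t) (F t)) with (P K t - F t).
  assert (T := series_tail_bound (term t) (fun N => Cmod (d N)) (F t) Sd K (HF t) HS (Hb t)).
  specialize (HK0 K HK). unfold ball_norm in HK0. 
  unfold P. replace (sum_n (term t) K - F t) with (- (F t - sum_n (term t) K)) by ring.
  rewrite Cmod_opp. eapply Rle_lt_trans. exact T.
  change (Rabs (sum_n (fun N : nat => Cmod (d N)) K - Sd) < eps) in HK0.
  eapply Rle_lt_trans. 2: exact HK0. rewrite Rabs_minus_sym. apply Rle_abs. }
set (h := fun K => sum_n (fun N => d N * u ^ N / RtoC (INR (S N))) K).
assert (HI : forall K, is_RInt (V := C_R_CompleteNormedModule) (P K) 0 1 (h K)).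
{ intros K. eapply is_RInt_ext. 2: apply is_RInt_poly.
  intros x Hx. rewrite Rmin_left, Rmax_right in Hx by lra. unfold P, term.
  assert (E : @sum_n C_AbelianMonoid (fun N => d N * (RtoC (clamp x) * u) ^ N) K = @sum_n C_AbelianMonoid (fun N => d N * (RtoC x * u) ^ N) K).
  { apply sum_n_ext. intros N. rewrite clamp_id by lra. reflexivity. }
  symmetry; exact E. }
destruct (@filterlim_RInt nat C_R_CompleteNormedModule P 0 1 eventually _ F h HI Hunif) as [If [Hh HIf]].
assert (HI2 : is_RInt (V := C_R_CompleteNormedModule) (fun s : R => g (0 + RtoC s * (u - 0))) 0 1 If).
{ eapply is_RInt_ext. 2: exact HIf.
  intros x Hx. rewrite Rmin_left, Rmax_right in Hx by lra.
  replace (0 + RtoC x * (u - 0)) with (RtoC x * u) by ring.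
  apply (is_series_C_unique (term x)). apply HF.
  eapply is_series_ext. 2: apply (Hg x Hx). intros N; unfold term. rewrite clamp_id by lra. reflexivity. }
unfold line_int. rewrite (is_RInt_unique _ _ _ _ HI2).
apply is_series_C_shift. simpl; ring.
assert (Hh' : is_series (K := C_AbsRing) (V := C_NormedModule) (fun N => d N * u ^ N / RtoC (INR (S N))) If) by exact Hh.
replace ((u - 0) * If) with (@scal C_Ring C_ModuleSpace u If).
- eapply is_series_ext. 2: apply (is_series_scal (K := C_AbsRing) (V := C_NormedModule) u _ _ Hh').
  intros N. change (u * (d N * u ^ N / RtoC (INR (S N))) = intco d (S N) * u ^ S N).
  unfold intco. change (u ^ S N) with (u * u ^ N). unfold Cdiv. ring.
- change (u * If = (u - 0) * If). ring.
Qed.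

Notation isC a l := (is_series (K := C_AbsRing) (V := C_NormedModule) a l).

Lemma isC_ext (a b : nat -> C) l : (forall n, a n = b n) -> isC a l -> isC b l.
Proof. intros; eapply is_series_ext; eauto. Qed.
Lemma isC_plus (a b : nat -> C) la lb : isC a la -> isC b lb -> isC (fun n => a n + b n) (la + lb).
Proof. intros Ha Hb. exact (is_series_plus a b la lb Ha Hb). Qed.
Lemma isC_scal (c : C) (a : nat -> C) l : isC a l -> isC (fun n => c * a n) (c * l).
Proof. intros Ha. exact (is_series_scal c a l Ha). Qed.
Lemma isC_minus (a b : nat -> C) la lb : isC a la -> isC b lb -> isC (fun n => a n - b n) (la - lb).
Proof. intros Ha Hb. exact (is_series_minus a b la lb Ha Hb). Qed.
Lemma isC_shift_l (a : nat -> C) l : isC a l -> isC (fun k => a (S k)) (l - a 0%nat).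
Proof.
intros H. apply is_series_incr_1.
match goal with |- is_series _ ?L => replace L with l end. exact H.
assert (E : forall z w : C, z = z - w + w) by (intros; ring). apply E.
Qed.
Lemma isC_unique (a : nat -> C) l1 l2 : isC a l1 -> isC a l2 -> l1 = l2.
Proof. apply is_series_C_unique. Qed.

Lemma isC_zero (a : nat -> C) : (forall n, a n = 0) -> isC a (RtoC 0).
Proof.
intros H. unfold is_series. apply (filterlim_ext (fun _ => RtoC 0)).
- intros K. induction K. rewrite sum_O, H; auto. rewrite sum_Sn, <- IHK, H.
  change (RtoC 0 = 0 + 0). ring.
- apply filterlim_const.
Qed.

Lemma lsum_app (f : nat -> C) l1 l2 : lsum f (l1 ++ l2) = lsum f l1 + lsum f l2.
Proof. induction l1; simpl. unfold lsum; simpl. ring. unfold lsum in *; simpl. rewrite IHl1. ring. Qed.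
Lemma lsum_cons (f : nat -> C) a l : lsum f (a :: l) = f a + lsum f l.
Proof. reflexivity. Qed.
Lemma lsum_nil (f : nat -> C) : lsum f nil = 0.
Proof. reflexivity. Qed.
Lemma lsum_ext_in (f : nat -> C) (g : nat -> C) l : (forall x, In x l -> f x = g x) -> lsum f l = lsum g l.
Proof. induction l; intros H; simpl. auto. rewrite !lsum_cons. rewrite H, IHl; auto. intros; apply H; simpl; auto. left; auto. Qed.
Lemma lsum_scal (c : C) (f : nat -> C) l : c * lsum f l = lsum (fun x => c * f x) l.
Proof. induction l. unfold lsum; simpl; ring. rewrite !lsum_cons, <- IHl. ring. Qed.
Lemma lsum_plus (f : nat -> C) (g : nat -> C) l : lsum (fun x => f x + g x) l = lsum f l + lsum g l.
Proof. induction l. unfold lsum; simpl; ring. rewrite !lsum_cons, IHl. ring. Qed.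
Lemma lsum_zero (f : nat -> C) l : (forall x, In x l -> f x = 0) -> lsum f l = 0.
Proof. intros H. rewrite (lsum_ext_in f (fun _ => 0)) by (intros; apply H; auto). clear H. induction l. reflexivity. rewrite lsum_cons, IHl. ring. Qed.

Lemma sum_n_lsum (a : nat -> C) K : @sum_n C_AbelianMonoid a K = lsum a (seq 0 (S K)).
Proof.
induction K. rewrite sum_O. unfold lsum; simpl. ring.
rewrite sum_Sn, IHK. rewrite (seq_S (S K)), lsum_app. simpl. unfold lsum at 3; simpl.
change (lsum a (seq 0 (S K)) + a (S K) = lsum a (seq 0 (S K)) + (a (S K) + 0)). ring.
Qed.

Lemma isC_finite (a : nat -> C) K : (forall N, (K < N)%nat -> a N = 0) -> isC a (lsum a (seq 0 (S K))).
Proof.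
intros H. unfold is_series. rewrite <- sum_n_lsum.
apply (filterlim_ext_loc (fun _ => sum_n a K)).
- exists K. intros M HM. induction HM. auto. rewrite sum_Sn, <- IHHM, H by lia.
  symmetry; exact (plus_zero_r (sum_n a K)).
- apply filterlim_const.
Qed.

Lemma sum_n_le_series (b : nat -> R) B K : (forall n, 0 <= b n) -> is_series b B -> sum_n b K <= B.
Proof.
intros Hp HB.
assert (H := is_lim_seq_le_loc (fun _ => sum_n b K) (sum_n b) (sum_n b K) B).
simpl in H. apply H. exists K. intros M HM. induction HM. lra. rewrite sum_Sn. specialize (Hp (S m)).
change (sum_n b K <= sum_n b m + b (S m)). lra.
apply is_lim_seq_const. exact HB.
Qed.

Lemma abs_sum_rec (a b : nat -> R) (rho : R) :
  (0 <= rho < 1) -> (forall n, 0 <= a n) -> (forall n, 0 <= b n) ->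
  a 0%nat <= b 0%nat -> (forall n, a (S n) <= rho * a n + b (S n)) ->
  ex_series b -> ex_series a.
Proof.
intros Hr Ha Hb H0 HS [B HB].
assert (T : forall K, sum_n a K <= rho * sum_n a K - rho * a K + sum_n b K).
{ induction K. rewrite !sum_O. lra. rewrite !sum_Sn. specialize (HS K).
  change (sum_n a K + a (S K) <= rho * (sum_n a K + a (S K)) - rho * a (S K) + (sum_n b K + b (S K))). nra. }
assert (T2 : forall K, sum_n a K <= B / (1 - rho)).
{ intros K. specialize (T K). assert (HK := sum_n_le_series b B K Hb HB). specialize (Ha K).
  apply Rmult_le_reg_r with (1 - rho)%R. lra. unfold Rdiv. rewrite Rmult_assoc, Rinv_l by lra. nra. }
destruct (ex_finite_lim_seq_incr (sum_n a) (B / (1 - rho))%R) as [l Hl].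
- intros n. rewrite sum_Sn. specialize (Ha (S n)). change (sum_n a n <= sum_n a n + a (S n)). lra.
- exact T2.
- exists l. exact Hl.
Qed.

Definition abs_sum (c : nat -> C) := ex_series (fun N => Cmod (c N)).

Definition geoc (s : C) (c : nat -> C) (N : nat) : C := lsum (fun M => s ^ (N - M) * c M) (seq 0 (S N)).

Lemma geoc_0 s c : geoc s c 0 = c 0%nat.
Proof. unfold geoc, lsum; simpl. ring. Qed.

Lemma geoc_S s c N : geoc s c (S N) = s * geoc s c N + c (S N).
Proof.
unfold geoc. rewrite (seq_S (S N)), lsum_app. rewrite lsum_scal. simpl (0 + S N)%nat.
rewrite (lsum_ext_in (fun M => s ^ (S N - M) * c M) (fun M => s * (s ^ (N - M) * c M))).
- rewrite lsum_cons, lsum_nil. rewrite Nat.sub_diag. simpl. ring.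
- intros x Hx. apply in_seq in Hx. replace (S N - x)%nat with (S (N - x)) by lia. simpl. ring.
Qed.

Lemma abs_sum_geoc s c : (Cmod s < 1)%R -> abs_sum c -> abs_sum (geoc s c).
Proof.
intros Hs Hc. apply (abs_sum_rec _ (fun N => Cmod (c N)) (Cmod s)); auto.
- split; auto. apply Cmod_ge_0.
- intros; apply Cmod_ge_0.
- intros; apply Cmod_ge_0.
- rewrite geoc_0. lra.
- intros n. rewrite geoc_S. eapply Rle_trans. apply Cmod_triangle. rewrite Cmod_mult. lra.
Qed.

Lemma Cmod_div_INR (z : C) k : (Cmod (z / RtoC (INR (S k))) <= Cmod z)%R.
Proof.
unfold Cdiv. rewrite Cmod_mult. rewrite Cmod_inv. rewrite Cmod_R.
rewrite Rabs_pos_eq by apply pos_INR.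
rewrite <- (Rmult_1_r (Cmod z)) at 2. apply Rmult_le_compat_l. apply Cmod_ge_0.
rewrite <- Rinv_1. apply Rinv_le_contravar. lra. rewrite S_INR. assert (H := pos_INR k). lra.
intros E. apply RtoC_inj in E. apply (not_0_INR (S k)); auto.
Qed.

Lemma abs_sum_intco d : abs_sum d -> abs_sum (intco d).
Proof.
intros H. unfold abs_sum. apply (proj2 (ex_series_incr_1 _)). simpl.
apply (@ex_series_le R_AbsRing R_CompleteNormedModule _ (fun k => Cmod (d k))); auto.
intros n. unfold norm; simpl; unfold abs; simpl. rewrite Rabs_pos_eq by apply Cmod_ge_0.
apply Cmod_div_INR.
Qed.

Lemma abs_sum_shift c : abs_sum c -> abs_sum (fun N => c (S N)).
Proof. intros H. unfold abs_sum. apply (proj1 (ex_series_incr_1 (fun N => Cmod (c N)))). exact H. Qed.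

Lemma abs_sum_series (d : nat -> C) (t : C) : abs_sum d -> (Cmod t <= 1)%R -> exists D, isC (fun N => d N * t ^ N) D.
Proof.
intros H Ht. apply ex_series_C_abs.
apply (@ex_series_le R_AbsRing R_CompleteNormedModule _ (fun k => Cmod (d k))); auto.
intros n. unfold norm; simpl; unfold abs; simpl. rewrite Rabs_pos_eq by apply Cmod_ge_0.
rewrite Cmod_mult. rewrite <- (Rmult_1_r (Cmod (d n))) at 2. apply Rmult_le_compat_l. apply Cmod_ge_0.
apply Cmod_pow_le1; auto.
Qed.

Inductive form := Geo (s : C) | Inv.
Definition fmean (f : form) : C -> C := match f with Geo s => fun t => / (1 - s * t) | Inv => fun t => / t end.
Definition pre (f : form) (c : nat -> C) : nat -> C := match f with Geo s => geoc s c | Inv => fun N => c (S N) end.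
Definition trans (c : nat -> C) (f : form) : nat -> C := intco (pre f c).
Definition fok (f : form) : Prop := match f with Geo s => (Cmod s < 1)%R | Inv => True end.

Lemma abs_sum_pre f c : fok f -> abs_sum c -> abs_sum (pre f c).
Proof. destruct f; simpl; intros. apply abs_sum_geoc; auto. apply abs_sum_shift; auto. Qed.

Lemma one_minus_neq s t : (Cmod s < 1)%R -> (Cmod t <= 1)%R -> 1 - s * t <> 0.
Proof.
intros Hs Ht E. assert (E2 : s * t = 1). { replace (s * t) with (1 - (1 - s * t)) by ring. rewrite E. ring. }
assert (Cmod (s * t) < 1)%R. { rewrite Cmod_mult. assert (H1 := Cmod_ge_0 s). assert (H2 := Cmod_ge_0 t). nra. }
rewrite E2, Cmod_1 in H. lra.
Qed.

Lemma pre_series f c G t : fok f -> abs_sum c -> c 0%nat = 0 -> (Cmod t <= 1)%R -> t <> 0 ->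
  isC (fun N => c N * t ^ N) G -> isC (fun N => pre f c N * t ^ N) (fmean f t * G).
Proof.
destruct f as [s|]; simpl; intros Hs Hc H0 Ht Ht0 HG.
- destruct (abs_sum_series (geoc s c) t (abs_sum_geoc s c Hs Hc) Ht) as [D HD].
  set (e := fun N => match N with O => RtoC 0 | S k => s * t * (geoc s c k * t ^ k) end).
  assert (He : isC e (s * t * D)).
  { apply is_series_C_shift. reflexivity. simpl. apply isC_scal. exact HD. }
  assert (H2 := isC_minus _ _ _ _ HD He).
  assert (H3 : isC (fun N => c N * t ^ N) (D - s * t * D)).
  { eapply isC_ext. 2: exact H2. intros N. destruct N; simpl.
    - rewrite geoc_0. ring.
    - rewrite geoc_S. ring. }
  assert (E := isC_unique _ _ _ HG H3).
  assert (Hn := one_minus_neq s t Hs Ht).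
  replace (/ (1 - s * t) * G) with D. exact HD.
  rewrite E. assert (Q : forall z : C, / (1 - s * t) * (z - s * t * z) = z) by (intros; field; auto).
  symmetry; apply Q.
- apply isC_shift_l in HG. rewrite H0 in HG.
  assert (Q : forall z : C, / t * z = / t * (z - 0 * t ^ 0)) by (intros; ring).
  rewrite Q.
  eapply isC_ext. 2: apply isC_scal; exact HG.
  intros N. simpl. field. auto.
Qed.

Lemma abs_sum_finite (c : nat -> C) K : (forall N, (K < N)%nat -> c N = 0) -> abs_sum c.
Proof.
intros H. unfold abs_sum. apply (proj2 (ex_series_incr_n _ (S K))).
exists 0%R. unfold is_series. apply (filterlim_ext (fun _ => 0%R)).
- intros M. induction M. rewrite sum_O. rewrite H by lia. rewrite Cmod_0. auto.
  rewrite sum_Sn, <- IHM. rewrite H by lia. rewrite Cmod_0. change (0 = 0 + 0)%R. ring.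
- apply filterlim_const.
Qed.

Lemma line_int_zero g : line_int g 0 0 = 0.
Proof. unfold line_int. ring. Qed.

Lemma isC_at_zero (c : nat -> C) : c 0%nat = 0 -> isC (fun N => c N * 0 ^ N) (RtoC 0).
Proof. intros H. apply isC_zero. intros [|N]; simpl. rewrite H; ring. ring. Qed.

Lemma stage_step f c G : fok f -> abs_sum c -> c 0%nat = 0 ->
  (forall t, (Cmod t <= 1)%R -> isC (fun N => c N * t ^ N) (G t)) ->
  abs_sum (trans c f) /\ trans c f 0%nat = 0 /\
  forall u, (Cmod u <= 1)%R -> isC (fun N => trans c f N * u ^ N) (line_int (fun t => fmean f t * G t) 0 u).
Proof.
intros Hf Hc H0 HG. split; [|split].
- apply abs_sum_intco, abs_sum_pre; auto.
- reflexivity.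
- intros u Hu. destruct (Ceq_dec u 0) as [Eu|Eu].
  + subst u. rewrite line_int_zero. apply isC_at_zero. reflexivity.
  + apply line_int_series; auto. apply abs_sum_pre; auto.
    intros r Hr. apply pre_series; auto.
    * rewrite Cmod_mult, Cmod_R, Rabs_pos_eq by lra. assert (H1 := Cmod_ge_0 u). nra.
    * apply Cmult_neq_0; auto. intros E. apply RtoC_inj in E. lra.
    * apply HG. rewrite Cmod_mult, Cmod_R, Rabs_pos_eq by lra. assert (H1 := Cmod_ge_0 u). nra.
Qed.

Definition delta (k : nat) (N : nat) : C := if Nat.eqb N k then 1 else 0.
Definition e0 (n : nat) : nat -> C := intco (delta (n - 1)).

Lemma stage_base n : (1 <= n)%nat ->
  abs_sum (e0 n) /\ e0 n 0%nat = 0 /\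
  forall u, (Cmod u <= 1)%R -> isC (fun N => e0 n N * u ^ N) (itint_out ((fun t => t ^ (n - 1)) :: nil) u).
Proof.
intros Hn. split; [|split].
- apply abs_sum_intco. apply (abs_sum_finite _ (n - 1)). intros N HN. unfold delta.
  destruct (Nat.eqb_spec N (n-1)). lia. reflexivity.
- reflexivity.
- intros u Hu. simpl. destruct (Ceq_dec u 0) as [Eu|Eu].
  + subst u. rewrite line_int_zero. apply isC_at_zero. reflexivity.
  + apply line_int_series; auto.
    * apply (abs_sum_finite _ (n - 1)). intros N HN. unfold delta.
      destruct (Nat.eqb_spec N (n-1)). lia. reflexivity.
    * intros r Hr. set (t := RtoC r * u).
      assert (F := isC_finite (fun N => delta (n - 1) N * t ^ N) (n - 1)).
      replace (t ^ (n - 1) * 1) with (lsum (fun N => delta (n - 1) N * t ^ N) (seq 0 (S (n - 1)))).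
      apply F. intros N HN. unfold delta. destruct (Nat.eqb_spec N (n-1)). lia. ring.
      rewrite seq_S, lsum_app. rewrite lsum_zero. unfold lsum; simpl. unfold delta. rewrite Nat.eqb_refl. ring.
      intros x Hx. apply in_seq in Hx. unfold delta. destruct (Nat.eqb_spec x (n-1)). lia. ring.
Qed.

Lemma stages n fs : (1 <= n)%nat -> List.Forall fok fs ->
  abs_sum (fold_left trans fs (e0 n)) /\ fold_left trans fs (e0 n) 0%nat = 0 /\
  forall u, (Cmod u <= 1)%R -> isC (fun N => fold_left trans fs (e0 n) N * u ^ N)
     (itint ((fun t => t ^ (n - 1)) :: map fmean fs) u).
Proof.
intros Hn. unfold itint. induction fs as [|f fs IH] using rev_ind; intros Hok.
- simpl. apply stage_base; auto.
- apply Forall_app in Hok. destruct Hok as [Hok1 Hok2]. inversion Hok2; subst.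
  destruct (IH Hok1) as [A [B C]].
  rewrite fold_left_app. simpl.
  assert (E : forall u, itint_out (rev (map fmean (fs ++ f :: nil)) ++ (fun t => t ^ (n - 1)) :: nil) u =
     line_int (fun t => fmean f t * itint_out (rev (map fmean fs) ++ (fun t => t ^ (n - 1)) :: nil) t) 0 u).
  { intros u. rewrite map_app, rev_app_distr. simpl. reflexivity. }
  destruct (stage_step f _ _ H1 A B C) as [A' [B' C']].
  split; [|split]; auto. intros u Hu. simpl in E. rewrite E. apply C'; auto.
Qed.

Lemma lsum_comm (f : nat -> nat -> C) l1 l2 :
  lsum (fun a => lsum (fun b => f a b) l2) l1 = lsum (fun b => lsum (fun a => f a b) l1) l2.
Proof.
induction l1 as [|x l1 IH].
- simpl. symmetry. apply lsum_zero. intros; reflexivity.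
- rewrite lsum_cons, IH. rewrite <- lsum_plus. reflexivity.
Qed.

Lemma lsum_window (f : nat -> C) a k B : (a + k <= B)%nat ->
  lsum f (seq a k) = lsum (fun M => if ((a <=? M) && (M <? a + k))%bool then f M else 0) (seq 0 B).
Proof.
intros H.
replace (seq 0 B) with (seq 0 a ++ seq a k ++ seq (a + k) (B - (a + k))).
2:{ rewrite <- seq_app. replace (a + k)%nat with (0 + a + k)%nat at 1 by lia. rewrite <- seq_app.
    f_equal. lia. }
rewrite !lsum_app. rewrite (lsum_zero _ (seq 0 a)), (lsum_zero _ (seq (a + k) _)).
- rewrite (lsum_ext_in (fun M => if ((a <=? M) && (M <? a + k))%bool then f M else 0) f (seq a k)). ring.
  intros x Hx. apply in_seq in Hx. destruct (Nat.leb_spec a x), (Nat.ltb_spec x (a + k)); simpl; try lia. auto.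
- intros x Hx. apply in_seq in Hx. destruct (Nat.leb_spec a x), (Nat.ltb_spec x (a + k)); simpl; try lia; auto.
- intros x Hx. apply in_seq in Hx. destruct (Nat.leb_spec a x), (Nat.ltb_spec x (a + k)); simpl; try lia; auto.
Qed.

Lemma Cinv_R0 : / RtoC 0 = 0.
Proof. unfold Cinv, RtoC; simpl. f_equal; unfold Rdiv; ring. Qed.

Lemma Cpow_0_S k : (RtoC 0) ^ (S k) = 0.
Proof. simpl. ring. Qed.

Lemma div_INR0_pow (z : C) k : (1 <= k)%nat -> z / RtoC (INR 0) ^ k = 0.
Proof. intros H. destruct k. lia. simpl INR. rewrite Cpow_0_S. unfold Cdiv. rewrite Cinv_R0. ring. Qed.

Definition lprodl (f : nat -> C) (l : list nat) := lprod f l.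
Lemma lprod_app (f : nat -> C) l1 l2 : lprod f (l1 ++ l2) = lprod f l1 * lprod f l2.
Proof. induction l1; unfold lprod in *; simpl. ring. rewrite IHl1. ring. Qed.

Fixpoint zLB (n : nat) (kx : list (nat * C)) (L : nat) : C :=
  match kx with
  | nil => if Nat.leb L n then 1 else 0
  | (k, y) :: r => lsum (fun n1 => Cpow y n1 / Cpow (RtoC (INR n1)) k * zLB n1 r L) (seq 1 n)
  end.

Lemma zLB_vanish kx : forall n L, (n < L)%nat -> zLB n kx L = 0.
Proof.
induction kx as [|[k y] r IH]; intros n L H; simpl.
- destruct (Nat.leb_spec L n). lia. reflexivity.
- apply lsum_zero. intros x Hx. apply in_seq in Hx. rewrite IH by lia. ring.
Qed.

Lemma zstar_zLB kx : forall n, (1 <= n)%nat -> zstar n kx = zLB n kx 1.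
Proof.
induction kx as [|[k y] r IH]; intros n H; simpl.
- destruct n; [lia | reflexivity].
- apply lsum_ext_in. intros x Hx. apply in_seq in Hx. rewrite IH by lia. reflexivity.
Qed.

Lemma zLB_snoc kx k y : forall n L,
  zLB n (kx ++ (k, y) :: nil) L =
  lsum (fun M => (if Nat.leb L M then 1 else 0) * (Cpow y M / Cpow (RtoC (INR M)) k * zLB n kx M)) (seq 1 n).
Proof.
induction kx as [|[k' y'] r IH]; intros n L; simpl.
- apply lsum_ext_in. intros x Hx. apply in_seq in Hx. destruct (Nat.leb_spec x n); [|lia].
  destruct (Nat.leb_spec L x); ring.
- rewrite (lsum_ext_in _ (fun n1 => lsum (fun M => Cpow y' n1 / Cpow (RtoC (INR n1)) k' *
     ((if Nat.leb L M then 1 else 0) * (Cpow y M / Cpow (RtoC (INR M)) k * zLB n1 r M))) (seq 1 n))).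
  + rewrite lsum_comm. apply lsum_ext_in. intros M HM.
    rewrite !lsum_scal. apply lsum_ext_in. intros x Hx. ring.
  + intros x Hx. apply in_seq in Hx. rewrite IH. rewrite lsum_scal.
    replace (seq 1 n) with (seq 1 x ++ seq (1 + x) (n - x)).
    2:{ rewrite <- seq_app. f_equal. lia. }
    rewrite lsum_app. rewrite (lsum_zero _ (seq (1 + x) _)). ring.
    intros M HM. apply in_seq in HM. rewrite (zLB_vanish r x M) by lia. ring.
Qed.

Lemma lim_fst (a : nat -> C) l : filterlim a eventually (locally (l : C_UniformSpace)) ->
  is_lim_seq (fun N => fst (a N)) (fst l).
Proof.
intros H. apply (proj2 (filterlim_locally (U := R_UniformSpace) _ _)). intros eps.
destruct (proj1 (filterlim_locally (U := C_UniformSpace) _ _) H eps) as [K HK].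
exists K. intros N HN. destruct (HK N HN) as [H1 H2]. exact H1.
Qed.
Lemma lim_snd (a : nat -> C) l : filterlim a eventually (locally (l : C_UniformSpace)) ->
  is_lim_seq (fun N => snd (a N)) (snd l).
Proof.
intros H. apply (proj2 (filterlim_locally (U := R_UniformSpace) _ _)). intros eps.
destruct (proj1 (filterlim_locally (U := C_UniformSpace) _ _) H eps) as [K HK].
exists K. intros N HN. destruct (HK N HN) as [H1 H2]. exact H2.
Qed.

Lemma Li_series k y r l : (1 <= k)%nat ->
  isC (fun K => y ^ K / RtoC (INR K) ^ k * LiN (K - 1) r) l -> Li ((k, y) :: r) = l.
Proof.
intros Hk H.
assert (E : forall N, LiN N ((k, y) :: r) = @sum_n C_AbelianMonoid (fun K => y ^ K / RtoC (INR K) ^ k * LiN (K - 1) r) N).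
{ intros N. rewrite sum_n_lsum. simpl LiN.
  change (seq 0 (S N)) with (0%nat :: seq 1 N). rewrite lsum_cons. rewrite div_INR0_pow by auto. ring. }
unfold Li. destruct l as [l1 l2].
assert (H1 := lim_fst _ _ H). assert (H2 := lim_snd _ _ H).
assert (H1' : is_lim_seq (fun N => fst (LiN N ((k, y) :: r))) l1).
{ eapply is_lim_seq_ext. 2: exact H1. intros N; rewrite E; reflexivity. }
assert (H2' : is_lim_seq (fun N => snd (LiN N ((k, y) :: r))) l2).
{ eapply is_lim_seq_ext. 2: exact H2. intros N; rewrite E; reflexivity. }
rewrite (is_lim_seq_unique _ _ H1'), (is_lim_seq_unique _ _ H2'). reflexivity.
Qed.

Lemma Li_nil : Li nil = 1.
Proof.
unfold Li. simpl. rewrite !Lim_seq_const. reflexivity.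
Qed.

Definition conv (s : C) (k : nat) (f : nat -> C) (N : nat) : C :=
  lsum (fun M => s ^ (N - M) * f M) (seq 0 N) / RtoC (INR N) ^ k.
Definition blockc (s : C) (k : nat) (c : nat -> C) (N : nat) : C :=
  lsum (fun M => s ^ (N - 1 - M) * c M) (seq 0 N) / RtoC (INR N) ^ k.

Lemma conv_ext s k f g N : (forall M, f M = g M) -> conv s k f N = conv s k g N.
Proof. intros H. unfold conv. f_equal. apply lsum_ext_in. intros; rewrite H; auto. Qed.

Lemma lsum_scal_r (c : C) (f : nat -> C) l : lsum f l * c = lsum (fun x => f x * c) l.
Proof. rewrite Cmult_comm, lsum_scal. apply lsum_ext_in; intros; ring. Qed.

Lemma conv_lin s k (h : nat -> nat -> C) l a (g : nat -> C) N :
  conv s k (fun M => lsum (fun j => h j M) l + a * g M) N =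
  lsum (fun j => conv s k (h j) N) l + a * conv s k g N.
Proof.
unfold conv. unfold Cdiv.
rewrite (lsum_ext_in _ (fun M => lsum (fun j => s ^ (N - M) * h j M) l + a * (s ^ (N - M) * g M))).
- rewrite lsum_plus, lsum_comm. rewrite <- (lsum_scal a (fun M => s ^ (N - M) * g M)).
  rewrite Cmult_plus_distr_r, lsum_scal_r. ring.
- intros M _. rewrite Cmult_plus_distr_l, lsum_scal. ring.
Qed.

Lemma blockc_conv s k c N (D : C) : D * s * blockc s k c N = conv s k (fun M => D * c M) N.
Proof.
unfold blockc, conv, Cdiv. rewrite Cmult_assoc. f_equal.
rewrite lsum_scal. apply lsum_ext_in. intros M HM. apply in_seq in HM.
replace (N - M)%nat with (S (N - 1 - M)) by lia. simpl. ring.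
Qed.

Lemma pow_ratio (s a : C) M N : s <> 0 -> (M <= N)%nat -> s ^ (N - M) * a ^ M = s ^ N * (a / s) ^ M.
Proof.
intros Hs H. replace N with ((N - M) + M)%nat at 2 by lia. rewrite Cpow_add_r.
unfold Cdiv. rewrite Cpow_mult_l, Cpow_inv by auto. field. apply Cpow_nz; auto.
Qed.

Lemma Cinv_pow_le1 N k : (Cmod (/ RtoC (INR N) ^ k) <= 1)%R.
Proof.
destruct k.
- simpl. replace (/ 1) with (RtoC 1) by (unfold Cinv, RtoC; simpl; f_equal; field). rewrite Cmod_1. lra.
- destruct N.
  + simpl INR. rewrite Cpow_0_S, Cinv_R0, Cmod_0. lra.
  + rewrite Cmod_inv. rewrite Cmod_pow, Cmod_R. rewrite Rabs_pos_eq by apply pos_INR.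
    rewrite <- Rinv_1. apply Rinv_le_contravar. lra. rewrite <- (pow1 (S k)). apply pow_incr.
    rewrite S_INR. assert (H := pos_INR N). lra.
    apply Cpow_nz. intros E. apply RtoC_inj in E. apply (not_0_INR (S N)); auto.
Qed.

Lemma Cmod_divpow_le (z : C) N k : (Cmod (z / RtoC (INR N) ^ k) <= Cmod z)%R.
Proof.
unfold Cdiv. rewrite Cmod_mult. rewrite <- (Rmult_1_r (Cmod z)) at 2.
apply Rmult_le_compat_l. apply Cmod_ge_0. apply Cinv_pow_le1.
Qed.

Lemma abs_sum_conv s k f : (Cmod s < 1)%R -> abs_sum f -> abs_sum (conv s k f).
Proof.
intros Hs Hf. unfold abs_sum. apply (proj2 (ex_series_incr_1 _)).
apply (@ex_series_le R_AbsRing R_CompleteNormedModule _ (fun K => Cmod (geoc s f K))).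
- intros K. unfold norm; simpl; unfold abs; simpl. rewrite Rabs_pos_eq by apply Cmod_ge_0.
  eapply Rle_trans. apply Cmod_divpow_le.
  replace (lsum (fun M => s ^ (S K - M) * f M) (seq 0 (S K))) with (s * geoc s f K).
  rewrite Cmod_mult. assert (H := Cmod_ge_0 (geoc s f K)). assert (H' := Cmod_ge_0 s). nra.
  unfold geoc. rewrite lsum_scal. apply lsum_ext_in. intros M HM. apply in_seq in HM.
  replace (S K - M)%nat with (S (K - M)) by lia. simpl. ring.
- apply abs_sum_geoc; auto.
Qed.

Lemma abs_sum_geom_div (s : C) k : (Cmod s < 1)%R -> abs_sum (fun N => s ^ N / RtoC (INR N) ^ k).
Proof.
intros Hs. unfold abs_sum.
apply (@ex_series_le R_AbsRing R_CompleteNormedModule _ (fun N => (Cmod s) ^ N)%R).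
- intros N. unfold norm; simpl; unfold abs; simpl. rewrite Rabs_pos_eq by apply Cmod_ge_0.
  eapply Rle_trans. apply Cmod_divpow_le. rewrite Cmod_pow. lra.
- exists (/ (1 - Cmod s))%R. apply is_series_geom. rewrite Rabs_pos_eq by apply Cmod_ge_0. auto.
Qed.

Lemma RtoC_INR_S_neq N : RtoC (INR (S N)) <> 0.
Proof. intros E. apply RtoC_inj in E. apply (not_0_INR (S N)); auto. Qed.

Lemma trans_geo_block s c : trans c (Geo s) = blockc s 1 c.
Proof.
apply functional_extensionality. intros N. unfold trans, blockc, intco, pre. destruct N.
- symmetry. apply div_INR0_pow. auto.
- unfold geoc. simpl (S N - 1)%nat. rewrite Nat.sub_0_r. simpl (RtoC (INR (S N)) ^ 1). rewrite Cmult_1_r. reflexivity.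
Qed.

Lemma trans_inv_block s k c : (1 <= k)%nat -> trans (blockc s k c) Inv = blockc s (S k) c.
Proof.
intros Hk. apply functional_extensionality. intros N. unfold trans, intco, pre. destruct N.
- unfold blockc. simpl. unfold lsum; simpl. unfold Cdiv. rewrite Cmult_0_l. reflexivity.
- unfold blockc. change (RtoC (INR (S N)) ^ S k) with (RtoC (INR (S N)) * RtoC (INR (S N)) ^ k).
  assert (HN := RtoC_INR_S_neq N). set (X := RtoC (INR (S N))).
  field. split; auto. apply Cpow_nz; auto.
Qed.

Lemma block_fold s k c : (1 <= k)%nat -> fold_left trans (Geo s :: repeat Inv (k - 1)) c = blockc s k c.
Proof.
intros Hk. destruct k. lia. simpl (S k - 1)%nat. rewrite Nat.sub_0_r. clear Hk.
simpl. rewrite trans_geo_block. induction k.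
- reflexivity.
- change (repeat Inv (S k)) with (Inv :: repeat Inv k). rewrite repeat_cons, fold_left_app, IHk.
  simpl. apply trans_inv_block. lia.
Qed.

Lemma lsum_minus (f g : nat -> C) l : lsum f l - lsum g l = lsum (fun x => f x - g x) l.
Proof. induction l. unfold lsum; simpl; ring. rewrite !lsum_cons, <- IHl. ring. Qed.

Lemma conv_scal s k a f N : conv s k (fun M => a * f M) N = a * conv s k f N.
Proof.
unfold conv, Cdiv. rewrite Cmult_assoc. f_equal. rewrite lsum_scal. apply lsum_ext_in. intros; ring.
Qed.

Lemma conv_0 s k f : (1 <= k)%nat -> conv s k f 0 = 0.
Proof. intros Hk. unfold conv. apply div_INR0_pow; auto. Qed.

Lemma LiN_conv (s s' : C) (k k' : nat) (r : list (nat * C)) (N : nat) : s' <> 0 -> (1 <= k)%nat -> (1 <= k')%nat ->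
  s' ^ N / RtoC (INR N) ^ k' * LiN (N - 1) ((k, s / s') :: r) =
  conv s' k' (fun M => s ^ M / RtoC (INR M) ^ k * LiN (M - 1) r) N.
Proof.
intros Hs Hk Hk'. destruct N as [|K].
- rewrite conv_0 by auto. rewrite div_INR0_pow by auto. ring.
- unfold conv. simpl (S K - 1)%nat. rewrite Nat.sub_0_r. simpl LiN.
  change (seq 0 (S K)) with (0%nat :: seq 1 K). rewrite lsum_cons.
  rewrite (div_INR0_pow (s ^ 0)) by auto.
  rewrite (lsum_ext_in (fun M => s' ^ (S K - M) * (s ^ M / RtoC (INR M) ^ k * LiN (M - 1) r))
     (fun M => s' ^ (S K) * ((s / s') ^ M / RtoC (INR M) ^ k * LiN (M - 1) r))).
  + rewrite <- lsum_scal. unfold Cdiv. ring.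
  + intros M HM. apply in_seq in HM. unfold Cdiv. rewrite !Cmult_assoc.
    rewrite (pow_ratio s' s M (S K)) by (auto; lia). unfold Cdiv. ring.
Qed.

Lemma sum_cut (g : nat -> C) n N : g 0%nat = 0 -> (forall M, (n < M)%nat -> g M = 0) ->
  lsum g (seq 0 N) = lsum (fun M => (1 - (if Nat.leb N M then 1 else 0)) * g M) (seq 1 n).
Proof.
intros H0 Hn.
rewrite (lsum_window g 0 N (S (N + n))) by lia.
rewrite (lsum_window _ 1 n (S (N + n))) by lia.
apply lsum_ext_in. intros M _.
destruct (Nat.leb_spec 0 M), (Nat.ltb_spec M (0 + N)), (Nat.leb_spec 1 M), (Nat.ltb_spec M (1 + n)), (Nat.leb_spec N M);
 simpl; try lia; try ring;
 first [ (assert (M = 0)%nat by lia; subst; rewrite H0; ring) | (rewrite Hn by lia; ring) ].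
Qed.

Lemma conv_u (s s' : C) (k k' n : nat) (l : list (nat * C)) (N : nat) : s' <> 0 -> (1 <= k)%nat -> (1 <= k')%nat ->
  conv s' k' (fun M => s ^ M / RtoC (INR M) ^ k * zLB n l M) N =
  s' ^ N / RtoC (INR N) ^ k' * (zLB n (l ++ (k, s / s') :: nil) 1 - zLB n (l ++ (k, s / s') :: nil) N).
Proof.
intros Hs Hk Hk'. rewrite !zLB_snoc. rewrite lsum_minus.
set (g := fun M => (s / s') ^ M / RtoC (INR M) ^ k * zLB n l M).
rewrite (lsum_ext_in _ (fun M => (1 - (if N <=? M then 1 else 0)) * g M)).
2:{ intros M HM. apply in_seq in HM. destruct (Nat.leb_spec 1 M); [|lia]. unfold g. ring. }
rewrite <- sum_cut.
- unfold conv. rewrite (lsum_ext_in _ (fun M => s' ^ N * g M)).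
  + rewrite <- lsum_scal. unfold Cdiv. ring.
  + intros M HM. apply in_seq in HM. unfold g, Cdiv. rewrite !Cmult_assoc.
    rewrite (pow_ratio s' s M N) by (auto; lia). unfold Cdiv. ring.
- unfold g. rewrite div_INR0_pow by auto. ring.
- intros M HM. unfold g. rewrite zLB_vanish by auto. ring.
Qed.

Section Alg.
Variables (sigma : nat -> C) (m : nat -> nat) (n : nat).

Definition w (i N : nat) : C := sigma i ^ N / RtoC (INR N) ^ (m i).
Definition ratio (i : nat) : C := sigma i / sigma (S i).
Definition pr (k : nat) : nat * C := (m k, ratio k).
Definition lz (i : nat) : list (nat * C) := map pr (seq 1 i).
Definition restl (j i : nat) : list (nat * C) := map pr (rev (seq (S j) (i - 1 - j))).
Definition Zs (j : nat) : C := zstar n (lz j).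
Definition v (j i N : nat) : C := w i N * LiN (N - 1) (restl j i).
Definition Dd (i : nat) : C := sigma 1 ^ (n + 1) * lprod sigma (seq 2 (i - 1)).
Fixpoint Aseq (i : nat) : nat -> C :=
  match i with O => e0 n | S i' => blockc (sigma (S i')) (m (S i')) (Aseq i') end.

Definition Qprop (i : nat) : Prop := forall N,
  RtoC (INR n) * Dd i * Aseq i N =
  lsum (fun j => (-1) ^ j * Zs j * v j i N) (seq 0 i) + (-1) ^ i * (w i N * zLB n (lz (i - 1)) N).

Lemma e0_val M : (1 <= n)%nat -> e0 n M = if Nat.eqb M n then / RtoC (INR n) else 0.
Proof.
intros Hn. unfold e0, intco, delta. destruct M.
- destruct (Nat.eqb_spec 0 n). lia. reflexivity.
- destruct (Nat.eqb_spec M (n - 1)), (Nat.eqb_spec (S M) n); try lia.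
  + rewrite e1. unfold Cdiv. ring.
  + unfold Cdiv; ring.
Qed.

Lemma lsum_single (f : nat -> C) a N : (forall M, M <> a -> f M = 0) ->
  lsum f (seq 0 N) = if Nat.ltb a N then f a else 0.
Proof.
intros H. induction N.
- reflexivity.
- rewrite seq_S, lsum_app, IHN. simpl. unfold lsum at 1; simpl.
  destruct (Nat.ltb_spec a N), (Nat.ltb_spec a (S N)); try lia.
  + rewrite (H N) by lia. ring.
  + assert (a = N) by lia. subst. ring.
  + rewrite (H N) by lia. ring.
Qed.

Lemma Q_base : (1 <= n)%nat -> (1 <= m 1)%nat -> sigma 1 <> 0 -> Qprop 1.
Proof.
intros Hn Hm Hs N. unfold Qprop.
assert (D1 : Dd 1 = sigma 1%nat ^ (n + 1)). { unfold Dd; simpl. unfold lprod; simpl. ring. }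
assert (R : lsum (fun j => (-1) ^ j * Zs j * v j 1 N) (seq 0 1) + (-1) ^ 1 * (w 1 N * zLB n (lz (1 - 1)) N)
   = w 1 N * (1 - (if Nat.leb N n then 1 else 0))).
{ unfold lsum, Zs, v, lz, restl. simpl map. simpl rev. simpl seq. simpl map.
  change (zLB n nil N) with (if Nat.leb N n then RtoC 1 else RtoC 0).
  change (zstar n nil) with (RtoC 1). change (LiN (N - 1) nil) with (RtoC 1). simpl. ring. }
rewrite R, D1. simpl Aseq. unfold blockc.
rewrite (lsum_single _ n N).
2:{ intros M HM. rewrite e0_val by auto. destruct (Nat.eqb_spec M n). lia. ring. }
rewrite e0_val by auto. rewrite Nat.eqb_refl.
assert (Hn' : RtoC (INR n) <> 0). { intros E'. apply RtoC_inj in E'. apply (not_0_INR n); [lia|auto]. }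
destruct (Nat.ltb_spec n N), (Nat.leb_spec N n); try lia.
- assert (E : sigma 1%nat ^ (n + 1) * sigma 1%nat ^ (N - 1 - n) = sigma 1%nat ^ N).
  { rewrite <- Cpow_add_r. f_equal. lia. }
  assert (HX : RtoC (INR N) ^ m 1%nat <> 0).
  { apply Cpow_nz. intros E'. apply RtoC_inj in E'. apply (not_0_INR N); [lia|auto]. }
  unfold w. rewrite <- E. unfold Cdiv. field. auto.
- unfold Cdiv. ring.
Qed.

Lemma restl_S j i : (j <= i)%nat -> restl j (S (S i)) = pr (S i) :: restl j (S i).
Proof.
intros H. unfold restl.
replace (S (S i) - 1 - j)%nat with (S (i - j)) by lia.
replace (S i - 1 - j)%nat with (i - j)%nat by lia.
rewrite seq_S, rev_app_distr. simpl. replace (S (j + (i - j))) with (S i) by lia. reflexivity.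
Qed.

Lemma Q_step i : (1 <= n)%nat -> sigma (S (S i)) <> 0 -> (1 <= m (S i))%nat -> (1 <= m (S (S i)))%nat ->
  Qprop (S i) -> Qprop (S (S i)).
Proof.
intros Hn Hs' Hm Hm' Q N. unfold Qprop.
assert (D : Dd (S (S i)) = Dd (S i) * sigma (S (S i))).
{ unfold Dd. simpl (S (S i) - 1)%nat. simpl (S i - 1)%nat. rewrite !Nat.sub_0_r.
  rewrite seq_S, lprod_app. change (lprod sigma ((2 + i)%nat :: nil)) with (sigma (S (S i)) * 1). ring. }
change (Aseq (S (S i))) with (blockc (sigma (S (S i))) (m (S (S i))) (Aseq (S i))).
rewrite D. replace (RtoC (INR n) * (Dd (S i) * sigma (S (S i))) * blockc (sigma (S (S i))) (m (S (S i))) (Aseq (S i)) N)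
  with ((RtoC (INR n) * Dd (S i)) * sigma (S (S i)) * blockc (sigma (S (S i))) (m (S (S i))) (Aseq (S i)) N) by ring.
rewrite blockc_conv.
rewrite (conv_ext _ _ _ _ N Q).
assert (E1 : (S i - 1 = i)%nat) by lia. assert (E2 : (S (S i) - 1 = S i)%nat) by lia.
rewrite ?E1, ?E2.
rewrite conv_lin.
rewrite (seq_S (S i)), lsum_app. simpl (0 + S i)%nat.
rewrite (lsum_ext_in (fun j => conv (sigma (S (S i))) (m (S (S i))) (fun M => (-1) ^ j * Zs j * v j (S i) M) N)
   (fun j => (-1) ^ j * Zs j * v j (S (S i)) N)).
2:{ intros j Hj. apply in_seq in Hj. rewrite conv_scal. unfold v. rewrite restl_S by lia.
    unfold w. rewrite <- LiN_conv by auto. unfold pr, ratio. reflexivity. }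
unfold w at 1. rewrite conv_u by auto.
assert (Lz : lz i ++ (m (S i), sigma (S i) / sigma (S (S i))) :: nil = lz (S i)).
{ unfold lz. rewrite (seq_S i), map_app. reflexivity. }
rewrite Lz. rewrite <- zstar_zLB by auto. fold (Zs (S i)).
assert (V : v (S i) (S (S i)) N = w (S (S i)) N).
{ unfold v, restl. replace (S (S i) - 1 - S i)%nat with 0%nat by lia. simpl. ring. }
rewrite lsum_cons, lsum_nil. rewrite V. unfold w.
change ((-1) ^ S (S i)) with (-1 * (-1) ^ S i). ring.
Qed.

Lemma Q_all p : (1 <= n)%nat -> (forall k, (1 <= k <= p)%nat -> sigma k <> 0 /\ (1 <= m k)%nat) ->
  forall i, (1 <= i <= p)%nat -> Qprop i.
Proof.
intros Hn H i Hi. destruct i as [|i]. lia. induction i.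
- destruct (H 1%nat) as [A B]; [lia|]. apply Q_base; auto.
- destruct (H (S i)) as [A B]; [lia|]. destruct (H (S (S i))) as [A' B']; [lia|].
  apply Q_step; auto. apply IHi. lia.
Qed.

Lemma abs_sum_ext (f g : nat -> C) : (forall N, f N = g N) -> abs_sum f -> abs_sum g.
Proof. intros H Hf. replace g with f; auto. apply functional_extensionality; auto. Qed.

Lemma abs_sum_v p j : (forall k, (1 <= k <= p)%nat -> sigma k <> 0 /\ (Cmod (sigma k) < 1)%R /\ (1 <= m k)%nat) ->
  forall i, (j < i <= p)%nat -> abs_sum (v j i).
Proof.
intros H i Hi. induction i as [|i IH]. lia.
destruct (Nat.eq_dec i j) as [E|E].
- subst i. apply (abs_sum_ext (w (S j))).
  + intros N. unfold v, restl. replace (S j - 1 - j)%nat with 0%nat by lia. simpl. ring.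
  + destruct (H (S j)) as [A [B C]]; [lia|]. apply abs_sum_geom_div; auto.
- destruct i as [|i]. lia.
  destruct (H (S (S i))) as [A [B C]]; [lia|]. destruct (H (S i)) as [A' [B' C']]; [lia|].
  apply (abs_sum_ext (conv (sigma (S (S i))) (m (S (S i))) (v j (S i)))).
  + intros N. unfold v. rewrite restl_S by lia. unfold w. rewrite <- LiN_conv by auto. reflexivity.
  + apply abs_sum_conv; auto. apply IH. lia.
Qed.

Lemma fold_ds p : (forall k, (1 <= k <= p)%nat -> (1 <= m k)%nat) ->
  fold_left trans (flat_map (fun i => Geo (sigma i) :: repeat Inv (m i - 1)) (seq 1 p)) (e0 n) = Aseq p.
Proof.
intros H. induction p.
- reflexivity.
- rewrite seq_S, flat_map_app, fold_left_app, IHp by (intros; apply H; lia).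
  simpl. rewrite app_nil_r. apply block_fold. apply H. lia.
Qed.

End Alg.

Lemma isC_lsum (F : nat -> nat -> C) (L : nat -> C) l :
  (forall j, In j l -> isC (F j) (L j)) -> isC (fun N => lsum (fun j => F j N) l) (lsum L l).
Proof.
induction l as [|a l IH]; intros H.
- apply isC_zero. intros; reflexivity.
- rewrite lsum_cons. eapply isC_ext. 2: apply isC_plus. intros N; rewrite lsum_cons; reflexivity.
  apply H; left; auto. apply IH. intros; apply H; right; auto.
Qed.

Lemma lprod_nz (f : nat -> C) l : (forall k, In k l -> f k <> 0) -> lprod f l <> 0.
Proof.
induction l as [|a l IH]; intros H; unfold lprod; simpl.
- apply C1_nz.
- apply Cmult_neq_0. apply H; left; auto. apply IH. intros; apply H; right; auto.
Qed.

Lemma map_fmean_ds (sigma : nat -> C) (m : nat -> nat) l :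
  flat_map (fun i => (fun t => / (1 - sigma i * t)) :: repeat (fun t => / t) (m i - 1)) l =
  map fmean (flat_map (fun i => Geo (sigma i) :: repeat Inv (m i - 1)) l).
Proof.
induction l as [|a l IH]. reflexivity.
simpl. rewrite map_app, <- IH. simpl. rewrite map_repeat. reflexivity.
Qed.

Lemma Forall_ds (sigma : nat -> C) (m : nat -> nat) p : (forall k, (1 <= k <= p)%nat -> (Cmod (sigma k) < 1)%R) ->
  List.Forall fok (flat_map (fun i => Geo (sigma i) :: repeat Inv (m i - 1)) (seq 1 p)).
Proof.
intros H. apply Forall_forall. intros f Hf. apply in_flat_map in Hf. destruct Hf as [i [Hi Hf]].
apply in_seq in Hi. destruct Hf as [Hf|Hf].
- subst f. simpl. apply H. lia.
- apply repeat_spec in Hf. subst f. simpl. auto.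
Qed.

Theorem mainTheorem2 (p : nat) (m : nat -> nat) (n : nat) (x : C) (sigma : nat -> C) :
  (1 <= p)%nat ->
  (forall i, (1 <= i <= p)%nat -> (1 <= m i)%nat) ->
  (1 <= n)%nat ->
  (0 < Cmod x <= 1)%R ->
  (forall i, (1 <= i <= p)%nat -> (0 < Cmod (sigma i) < 1)%R) ->
  let s := fun i : nat => if Nat.eqb i (p + 1)%nat then / x else sigma i in
  RtoC (INR n) *
    itint ((fun t => Cpow t (n - 1)%nat)
           :: flat_map (fun i => (fun t => / (1 - sigma i * t))
                                 :: repeat (fun t => / t) (m i - 1)%nat) (seq 1%nat p)) x
  = lsum (fun j =>
        Cpow (-1) j
        * zstar n (map (fun i => (m i, s i / s ((i + 1)%nat))) (seq 1%nat j))
        * Li (map (fun i => if Nat.eqb i p then (m p, sigma p * x)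
                            else (m i, s i / s ((i + 1)%nat)))
                  (rev (seq (j + 1)%nat (p - j)%nat)))
        / (Cpow (sigma 1%nat) (n + 1)%nat * lprod sigma (seq 2%nat (p - 1)%nat)))
      (seq 0%nat (p + 1)%nat).
Proof.
intros Hp Hm Hn Hx Hsig s.
assert (Hx0 : x <> 0). { intros E. rewrite E, Cmod_0 in Hx. lra. }
assert (Hs0 : forall k, (1 <= k <= p)%nat -> sigma k <> 0).
{ intros k Hk E. specialize (Hsig k Hk). rewrite E, Cmod_0 in Hsig. lra. }
assert (Hall : forall k, (1 <= k <= p)%nat -> sigma k <> 0 /\ (Cmod (sigma k) < 1)%R /\ (1 <= m k)%nat).
{ intros k Hk. split; [|split]. apply Hs0; auto. apply Hsig; auto. apply Hm; auto. }
set (D := Cpow (sigma 1%nat) (n + 1)%nat * lprod sigma (seq 2%nat (p - 1)%nat)).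
assert (HD : D <> 0).
{ unfold D. apply Cmult_neq_0. apply Cpow_nz. apply Hs0; lia.
  apply lprod_nz. intros k Hk. apply in_seq in Hk. apply Hs0. lia. }
(* LHS as a power series *)
rewrite map_fmean_ds.
destruct (stages n _ Hn (Forall_ds sigma m p (fun k Hk => proj2 (Hsig k Hk)))) as [_ [_ HL]].
specialize (HL x (proj2 Hx)).
rewrite (fold_ds sigma m n p Hm) in HL.
apply (isC_scal (RtoC (INR n))) in HL.
(* RHS as a power series *)
replace (seq 0 (p + 1)) with (seq 0 p ++ p :: nil) by (rewrite Nat.add_1_r, seq_S; reflexivity).
rewrite lsum_app.
rewrite lsum_cons, lsum_nil, Cplus_0_r.
assert (Tp : isC (fun N => (-1) ^ p * (w sigma m p N * zLB n (lz sigma m (p - 1)) N) * x ^ N / D)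
   ((-1) ^ p * zstar n (map (fun i => (m i, s i / s (i + 1)%nat)) (seq 1 p)) *
    Li (map (fun i => if Nat.eqb i p then (m p, sigma p * x) else (m i, s i / s (i + 1)%nat))
       (rev (seq (p + 1) (p - p)))) / D)).
{ rewrite Nat.sub_diag. change (rev (seq (p + 1) 0)) with (@nil nat). change (map _ nil) with (@nil (nat * C)).
  rewrite Li_nil.
  assert (Lz : map (fun i => (m i, s i / s (i + 1)%nat)) (seq 1 p) = lz sigma m (p - 1) ++ (m p, sigma p * x) :: nil).
  { replace (seq 1 p) with (seq 1 (p - 1) ++ p :: nil).
    2:{ destruct p; [lia|]. rewrite seq_S. simpl. rewrite Nat.sub_0_r. reflexivity. }
    rewrite map_app. f_equal.
    - unfold lz. apply map_ext_in. intros i Hi. apply in_seq in Hi. unfold s, pr, ratio.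
      destruct (Nat.eqb_spec i (p + 1)); [lia|]. destruct (Nat.eqb_spec (i + 1) (p + 1)); [lia|].
      rewrite Nat.add_1_r. reflexivity.
    - simpl. unfold s. destruct (Nat.eqb_spec p (p + 1)); [lia|]. rewrite Nat.eqb_refl.
      f_equal. f_equal. field. auto. }
  rewrite Lz, zstar_zLB, zLB_snoc by auto.
  assert (F := isC_finite (fun N => (-1) ^ p * (w sigma m p N * zLB n (lz sigma m (p - 1)) N) * x ^ N / D) n).
  match goal with |- isC _ ?L => replace L with (lsum (fun N => (-1) ^ p * (w sigma m p N * zLB n (lz sigma m (p - 1)) N) * x ^ N / D) (seq 0 (S n))) end.
  - apply F. intros N HN. rewrite zLB_vanish by auto. unfold Cdiv. ring.
  - change (seq 0 (S n)) with (0%nat :: seq 1 n). rewrite lsum_cons.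
    unfold w at 1. rewrite div_INR0_pow by (apply Hm; lia).
    rewrite (lsum_ext_in _ (fun M => ((-1) ^ p * / D) * ((if 1 <=? M then 1 else 0) * ((sigma p * x) ^ M / RtoC (INR M) ^ m p * zLB n (lz sigma m (p - 1)) M)))).
    + rewrite <- lsum_scal. unfold Cdiv. ring.
    + intros M HM. apply in_seq in HM. destruct (Nat.leb_spec 1 M); [|lia].
      unfold w. rewrite Cpow_mult_l. unfold Cdiv. ring. }
assert (Tj : forall j, In j (seq 0 p) ->
   isC (fun N => (-1) ^ j * Zs sigma m n j * v sigma m j p N * x ^ N / D)
   ((-1) ^ j * zstar n (map (fun i => (m i, s i / s (i + 1)%nat)) (seq 1 j)) *
    Li (map (fun i => if Nat.eqb i p then (m p, sigma p * x) else (m i, s i / s (i + 1)%nat))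
       (rev (seq (j + 1) (p - j)))) / D)).
{ intros j Hj. apply in_seq in Hj.
  assert (Lz : map (fun i => (m i, s i / s (i + 1)%nat)) (seq 1 j) = lz sigma m j).
  { unfold lz. apply map_ext_in. intros i Hi. apply in_seq in Hi. unfold s, pr, ratio.
    destruct (Nat.eqb_spec i (p + 1)); [lia|]. destruct (Nat.eqb_spec (i + 1) (p + 1)); [lia|].
    rewrite Nat.add_1_r. reflexivity. }
  assert (LL : map (fun i => if Nat.eqb i p then (m p, sigma p * x) else (m i, s i / s (i + 1)%nat))
       (rev (seq (j + 1) (p - j))) = (m p, sigma p * x) :: restl sigma m j p).
  { replace (seq (j + 1) (p - j)) with (seq (S j) (p - 1 - j) ++ p :: nil).
    2:{ replace (p - j)%nat with (S (p - 1 - j)) by lia. rewrite seq_S. rewrite Nat.add_1_r.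
        replace (S j + (p - 1 - j))%nat with p by lia. reflexivity. }
    rewrite rev_app_distr. simpl. rewrite Nat.eqb_refl. f_equal.
    unfold restl. apply map_ext_in. intros i Hi. apply in_rev in Hi. apply in_seq in Hi.
    destruct (Nat.eqb_spec i p); [lia|]. unfold s, pr, ratio.
    destruct (Nat.eqb_spec i (p + 1)); [lia|]. destruct (Nat.eqb_spec (i + 1) (p + 1)); [lia|].
    rewrite Nat.add_1_r. reflexivity. }
  rewrite Lz, LL. fold (Zs sigma m n j).
  assert (Hv := abs_sum_v sigma m p j Hall p ltac:(lia)).
  destruct (abs_sum_series _ x Hv (proj2 Hx)) as [l Hl].
  rewrite (Li_series (m p) (sigma p * x) (restl sigma m j p) l).
  - apply (isC_scal ((-1) ^ j * Zs sigma m n j / D)) in Hl.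
    eapply isC_ext. 2: (match goal with |- isC _ ?L => replace L with ((-1) ^ j * Zs sigma m n j / D * l) by (unfold Cdiv; ring) end; exact Hl).
    intros N. cbv beta. unfold Cdiv. ring.
  - apply Hm; lia.
  - eapply isC_ext. 2: exact Hl. intros K. cbv beta. unfold v, w. rewrite Cpow_mult_l. unfold Cdiv. ring. }
assert (HR := isC_plus _ _ _ _ (isC_lsum _ _ _ Tj) Tp).
eapply isC_unique. exact HL.
eapply isC_ext. 2: exact HR.
intros N.
assert (Q := Q_all sigma m n p Hn (fun k Hk => conj (Hs0 k Hk) (Hm k Hk)) p (conj Hp (le_n p)) N).
unfold Qprop in Q. change (Dd sigma n p) with D in Q.
cbv beta. rewrite (lsum_ext_in _ (fun j => ((-1) ^ j * Zs sigma m n j * v sigma m j p N) * (x ^ N / D)))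
  by (intros; unfold Cdiv; ring).
rewrite <- lsum_scal_r.
set (Lw := lsum (fun j => (-1) ^ j * Zs sigma m n j * v sigma m j p N) (seq 0 p)) in *.
assert (E : Lw = RtoC (INR n) * D * Aseq sigma m n p N - (-1) ^ p * (w sigma m p N * zLB n (lz sigma m (p - 1)) N))
  by (rewrite Q; ring).
rewrite E. field. auto.
Qed.
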